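(* Let $-1$ denote the automorphism of $\mathcal A_\theta^{alg}$ with $U_1\mapsto U_1^{-1}$, $U_2\mapsto U_2^{-1}$, and let $H^0(\mathcal A_\theta^{alg},{}_{-1}\mathcal A_\theta^{alg\ast})$ be the space of formal series $\varphi=\sum\varphi_{n,m}U_1^nU_2^m$ with $((-1)\cdot a)\varphi=\varphi a$ for all $a\in\mathcal A_\theta^{alg}$. Let $\mathbb Z_6$ be generated by the automorphism $-\omega$ with $U_1\mapsto U_2$, $U_2\mapsto\lambda^{-1/2}U_1^{-1}U_2$, acting termwise on this space. Then $H^0(\mathcal A_\theta^{alg},{}_{-1}\mathcal A_\theta^{alg\ast})^{\mathbb Z_6}\cong\mathbb C^2$.
   Context: Let $\theta\in\mathbb R\setminus\mathbb Q$, $\lambda=e^{2\pi i\theta}$, $\lambda^s:=e^{2\pi i\theta s}$. $\mathcal A_\theta^{alg}$ is the complex algebra of finite sums $\sum a_{n,m}U_1^nU_2^m$ with $U_1,U_2$ invertible and $U_2U_1=\lambda U_1U_2$; formal series $\sum_{(n,m)\in\mathbb Z^2}\varphi_{n,m}U_1^nU_2^m$ with arbitrary coefficients form an $\mathcal A_\theta^{alg}$-bimodule via multiplication. Termwise action of an automorphism $h$: $h\cdot\sum\varphi_{n,m}U_1^nU_2^m=\sum\varphi_{n,m}\,h\cdot(U_1^nU_2^m)$. *)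

(* Defs.v *)
From HB Require Import structures.
From Stdlib Require Import Reals ZArith.
From mathcomp Require Import all_boot all_order all_algebra.
From mathcomp Require Import Rstruct.
From mathcomp Require Import complex.
Set Implicit Arguments. Unset Strict Implicit. Unset Printing Implicit Defensive.
Import Order.TTheory GRing.Theory Num.Theory.

Definition Cplx := (Rdefinitions.R)[i].

Local Open Scope ring_scope.

Definition lam_pow (theta s : Rdefinitions.R) : Cplx :=
  Complex (Rtrigo_def.cos (2 * PI * theta * s)%R) (Rtrigo_def.sin (2 * PI * theta * s)%R).
Definition lam (theta : Rdefinitions.R) : Cplx := lam_pow theta 1%R.

(* A monomial term  c * U1^p * U2^q,  encoded as ((c, p), q). *)
Definition term := (Cplx * int * int)%type.
Definition tc (t : term) : Cplx := t.1.1.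
Definition tp (t : term) : int := t.1.2.
Definition tq (t : term) : int := t.2.

(* Product in A_theta using  U2 U1 = lambda U1 U2, hence
   U2^q U1^p' = lambda^(q p') U1^p' U2^q. *)
Definition tmul (theta : Rdefinitions.R) (a b : term) : term :=
  (tc a * tc b * lam theta ^ (tq a * tp b), tp a + tp b, tq a + tq b).
Definition tone : term := (1, 0, 0).
Definition tinv (theta : Rdefinitions.R) (a : term) : term :=
  ((tc a)^-1 * lam theta ^ (tp a * tq a), - tp a, - tq a).
Definition tpow (theta : Rdefinitions.R) (a : term) (n : int) : term :=
  match n with
  | Posz k => iter k (tmul theta a) tone
  | Negz k => iter k.+1 (tmul theta (tinv theta a)) tone
  end.

(* An automorphism given by the images g1, g2 of U1, U2 (each a monomial term);
   image of the monomial U1^n U2^m is h(U1)^n h(U2)^m. *)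
Definition himg (theta : Rdefinitions.R) (g1 g2 : term) (n m : int) : term :=
  tmul theta (tpow theta g1 n) (tpow theta g2 m).

(* Elements of A_theta^alg: finite sums of monomial terms. *)
Definition alg := seq term.
Definition act (theta : Rdefinitions.R) (g1 g2 : term) (a : alg) : alg :=
  map (fun t : term => let s := himg theta g1 g2 (tp t) (tq t) in
        ((tc t * tc s, tp s, tq s) : term)) a.

(* Formal series sum phi n m U1^n U2^m. *)
Definition series := int -> int -> Cplx.

(* Coefficient of U1^k U2^l in  a * phi  and  phi * a. *)
Definition lmul (theta : Rdefinitions.R) (a : alg) (phi : series) : series :=
  fun k l => \sum_(t <- a)
    tc (tmul theta t (phi (k - tp t) (l - tq t), k - tp t, l - tq t)).
Definition rmul (theta : Rdefinitions.R) (phi : series) (a : alg) : series :=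
  fun k l => \sum_(t <- a)
    tc (tmul theta (phi (k - tp t) (l - tq t), k - tp t, l - tq t) t).

Definition minus1_g1 : term := (1, -1, 0).
Definition minus1_g2 : term := (1, 0, -1).
Definition mom_g1 : term := (1, 0, 1).
Definition mom_g2 (theta : Rdefinitions.R) : term := (lam_pow theta (-1/2)%R, -1, 1).

Definition H0_twisted (theta : Rdefinitions.R) (phi : series) : Prop :=
  forall a : alg, lmul theta (act theta minus1_g1 minus1_g2 a) phi = rmul theta phi a.

(* Invariance under Z_6 = < -omega >, acting termwise:
   (-omega).phi = sum phi_{n,m} (-omega)(U1^n U2^m) equals phi. Since the
   exponent map of -omega is a bijection of Z^2, this says the coefficient of
   the image monomial equals (scalar of image) * phi_{n,m}. *)
Definition Z6_invariant (theta : Rdefinitions.R) (phi : series) : Prop :=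
  forall n m : int,
    let s := himg theta mom_g1 (mom_g2 theta) n m in
    phi (tp s) (tq s) = tc s * phi n m.

Definition inv_space (theta : Rdefinitions.R) (phi : series) : Prop :=
  H0_twisted theta phi /\ Z6_invariant theta phi.

(* Main.v *)
Require Import Defs.
From Stdlib Require Import Reals ZArith.
From mathcomp Require Import all_boot all_order all_algebra.
From mathcomp Require Import Rstruct complex.
From mathcomp Require Import zify ring.
Import Order.TTheory GRing.Theory Num.Theory.
Local Open Scope ring_scope.

Lemma lam_powD theta s t : lam_pow theta s * lam_pow theta t = lam_pow theta (s+t)%R.
Proof.
rewrite /lam_pow /GRing.mul /= /mulc /=.
have -> : forall X, Rmult X (s + t) = Rmult X s + Rmult X t by move=> X; exact: mulrDr.
by rewrite cosD sinD; congr Complex => //; rewrite addrC mulrC [X in _ + X]mulrC.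
Qed.

Lemma lam_pow0 theta : lam_pow theta 0 = 1.
Proof. by rewrite /lam_pow mulr0 cos_0 sin_0. Qed.

Definition mu theta := lam_pow theta (1/2).

Lemma mu_nu theta : mu theta * lam_pow theta (-1/2) = 1.
Proof. by rewrite /mu lam_powD (_ : (1/2 + -1/2 = 0)%R) ?lam_pow0 //; field. Qed.

Lemma mu_neq0 theta : mu theta != 0.
Proof. apply/eqP => h; have := mu_nu theta; rewrite h mul0r => /eqP; by rewrite eq_sym oner_eq0. Qed.

Lemma nuE theta : lam_pow theta (-1/2) = (mu theta)^-1.
Proof. by rewrite -[RHS]mulr1 -(mu_nu theta) mulKf // mu_neq0. Qed.

Lemma lamE theta : lam theta = mu theta * mu theta.
Proof. by rewrite /mu lam_powD /lam (_ : (1/2 + 1/2 = 1)%R) //; field. Qed.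
Definition ev2 (k l : int) : bool := ((k %% 2)%Z == 0) && ((l %% 2)%Z == 0).
Lemma P1 k l p q : ev2 (k - - p) (l - - q) = ev2 (k - p) (l - q).
Proof. rewrite /ev2; apply/idP/idP => /andP[/eqP h1 /eqP h2]; apply/andP; split; apply/eqP; lia. Qed.
Lemma P2 n m : ev2 (- m) (n + m) = ev2 n m.
Proof. rewrite /ev2; apply/idP/idP => /andP[/eqP h1 /eqP h2]; apply/andP; split; apply/eqP; lia. Qed.
Lemma md (a : int) : (a %% 2)%Z = 0 \/ (a %% 2)%Z = 1. Proof. lia. Qed.
Lemma t1 : ev2 0 0. Proof. by []. Qed.
Lemma t2 : ev2 1 0 = false. Proof. by []. Qed.

Lemma EM theta (a b : int) : mu theta ^ a * mu theta ^ b = mu theta ^ (a + b).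
Proof. by rewrite expfzDr // mu_neq0. Qed.

Lemma lamX theta (z : int) : lam theta ^ z = mu theta ^ (z + z).
Proof. by rewrite lamE expfzMl EM. Qed.

Lemma iter_gen theta (x y : int) (h : x * y = 0) (j : nat) :
  iter j (tmul theta (1, x, y)) tone = (1, j%:Z * x, j%:Z * y).
Proof.
elim: j => [|j IH]; first by rewrite /= !mul0r.
rewrite iterS IH /tmul /tc /tp /tq /=.
have -> : y * (j%:Z * x) = 0 by rewrite mulrCA [y * x]mulrC h mulr0.
by rewrite expr0z !mulr1 intS !mulrDl !mul1r.
Qed.

Lemma tpow_gen theta (x y : int) (h : x * y = 0) (n : int) :
  tpow theta (1, x, y) n = (1, n * x, n * y).
Proof.
case: n => k; first exact: iter_gen.
rewrite /tpow.
have -> : tinv theta (1, x, y) = (1, -x, -y).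
  by rewrite /tinv /tc /tp /tq /= h expr0z invr1 mulr1.
rewrite iter_gen ?mulrNN // NegzE.
by rewrite !mulrN !mulNr.
Qed.

Lemma iter_g2 theta (c : Cplx) (hc : c = (mu theta)^-1) (j : nat) :
  iter j (tmul theta (c, -1, 1)) tone = (mu theta ^ (- (j%:Z * j%:Z)), - j%:Z, j%:Z).
Proof.
elim: j => [|j IH]; first by rewrite /= mulr0 oppr0 expr0z.
rewrite iterS IH /tmul /tc /tp /tq /= hc lamX -exprN1 !EM intS.
congr (_ ^ _, _, _); ring.
Qed.

Lemma iter_g2n theta (c : Cplx) (hc : c = (mu theta) ^ (-1)) (j : nat) :
  iter j (tmul theta (c, 1, -1)) tone = (mu theta ^ (- (j%:Z * j%:Z)), j%:Z, - j%:Z).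
Proof.
elim: j => [|j IH]; first by rewrite /= mulr0 oppr0 expr0z.
rewrite iterS IH /tmul /tc /tp /tq /= hc lamX !EM intS.
congr (_ ^ _, _, _); ring.
Qed.

Lemma mom_g2E theta : mom_g2 theta = ((mu theta)^-1, -1, 1).
Proof. by rewrite /mom_g2 nuE. Qed.

Lemma tpow_g2 theta (m : int) :
  tpow theta (mom_g2 theta) m = (mu theta ^ (- (m * m)), - m, m).
Proof.
rewrite mom_g2E; case: m => k; first exact: iter_g2.
rewrite /tpow /tinv /tc /tp /tq /= iter_g2n; last first.
  by rewrite lamX invrK -{1}(expr1z (mu theta)) EM; congr (_ ^ _); ring.
rewrite /tmul /tc /tp /tq /= NegzE invrK !lamX -{1}(expr1z (mu theta)) !EM.
congr (_ ^ _, _, _); ring.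
Qed.

Lemma himg_m1 theta (p q : int) :
  himg theta minus1_g1 minus1_g2 p q = (1, -p, -q).
Proof.
rewrite /himg /minus1_g1 /minus1_g2 !tpow_gen ?mulr0 ?mul0r //.
rewrite /tmul /tc /tp /tq /= !mulr0 expr0z !mulr1 !mulrN1 addr0 add0r //.
Qed.

Lemma himg_om theta (n m : int) :
  himg theta mom_g1 (mom_g2 theta) n m = (mu theta ^ (- (m * m) + (- (n * m) + - (n * m))), - m, n + m).
Proof.
rewrite /himg /mom_g1 tpow_g2 tpow_gen ?mul0r //.
rewrite /tmul /tc /tp /tq /= lamX mul1r EM.
congr (_ ^ _, _, _); ring.
Qed.

From Stdlib Require Import FunctionalExtensionality.

Definition ef theta (al be : Cplx) : series :=
  fun k l => (if ev2 k l then al else be) * mu theta ^ (k * l).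

Lemma shape1 (c C X Y : Cplx) : c * 1 * (C * X) * Y = c * C * (X * Y).
Proof. ring. Qed.
Lemma shape2 (c C X Y : Cplx) : C * X * c * Y = c * C * (X * Y).
Proof. ring. Qed.

Lemma ef_H0 theta al be : H0_twisted theta (ef theta al be).
Proof.
move=> a; apply: functional_extensionality => k; apply: functional_extensionality => l.
rewrite /lmul /rmul /act big_map; apply: eq_bigr => -[[c p] q] _.
rewrite himg_m1 /tmul /tc /tp /tq /ef /= P1 shape1 shape2 !lamX !EM.
congr (_ * _ ^ _); ring.
Qed.

Lemma ef_Z6 theta al be : Z6_invariant theta (ef theta al be).
Proof.
move=> n m; cbv zeta; rewrite !himg_om /ef /tp /tq /tc /= P2 mulrCA EM.
congr (_ * _ ^ _); ring.
Qed.

Lemma K_gen theta (phi : series) (h : H0_twisted theta phi) (p q a0 b0 : int) :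
  phi (p * 2 + a0) (q * 2 + b0) =
  phi a0 b0 * mu theta ^ ((p * 2 + a0) * (q * 2 + b0) - a0 * b0).
Proof.
have := congr1 (fun F => F (a0 + p) (b0 + q)) (h [:: (1, p, q)]).
rewrite /lmul /rmul /act big_map !big_seq1 himg_m1 /tmul /tc /tp /tq /=.
rewrite (_ : a0 + p - - p = p * 2 + a0); last ring.
rewrite (_ : b0 + q - - q = q * 2 + b0); last ring.
rewrite (_ : a0 + p - p = a0); last ring.
rewrite (_ : b0 + q - q = b0); last ring.
rewrite !mul1r mulr1 !lamX => H.
have hX : mu theta ^ (- q * (p * 2 + a0) + - q * (p * 2 + a0)) *
          mu theta ^ (- (- q * (p * 2 + a0) + - q * (p * 2 + a0))) = 1.
  by rewrite EM subrr expr0z.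
rewrite -[LHS]mulr1 -hX mulrA H -mulrA EM.
congr (_ * _ ^ _); ring.
Qed.

Lemma K_phi theta (phi : series) (h : H0_twisted theta phi) (a b : int) :
  phi a b = phi (a %% 2)%Z (b %% 2)%Z * mu theta ^ (a * b - (a %% 2)%Z * (b %% 2)%Z).
Proof.
have := @K_gen theta phi h (a %/ 2)%Z (b %/ 2)%Z (a %% 2)%Z (b %% 2)%Z.
by rewrite -!divz_eq.
Qed.

Lemma ef00 theta al be : ef theta al be 0 0 = al.
Proof. by rewrite /ef mulr0 expr0z mulr1. Qed.
Lemma ef10 theta al be : ef theta al be 1 0 = be.
Proof. by rewrite /ef mulr0 expr0z mulr1. Qed.

Lemma repr theta (phi : series) (h : inv_space theta phi) (a b : int) :
  phi a b = phi 0 0 * ef theta 1 0 a b + phi 1 0 * ef theta 0 1 a b.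
Proof.
case: h => h0 hz.
have h01 : phi 0 1 = phi 1 0.
  have := hz 1 0; cbv zeta; rewrite himg_om /tp /tq /tc /=.
  by rewrite !mulr0 oppr0 !addr0 expr0z mul1r.
have h11 : phi 1 1 = phi 1 0 * mu theta ^ 1.
  have := hz 0 1; cbv zeta; rewrite himg_om /tp /tq /tc /=.
  rewrite !mul0r oppr0 !addr0 add0r mulr1 h01 (@K_phi theta phi h0) /=.
  rewrite (_ : ((-1) %% 2)%Z = 1) // (_ : (1 %% 2)%Z = 1) // => H.
  have hX : mu theta ^ (-1 * 1 - 1 * 1) * mu theta ^ (- (-1 * 1 - 1 * 1)) = 1.
    by rewrite EM subrr expr0z.
  rewrite -[LHS]mulr1 -hX mulrA H. rewrite [_ * phi 1 0]mulrC -mulrA EM.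
  congr (_ * _ ^ _); ring.
rewrite (@K_phi theta phi h0) /ef /ev2.
case: (md a) => ->; case: (md b) => ->; rewrite /= ?mulr0 ?subr0 ?mul0r ?mul1r ?add0r ?addr0 //.
all: rewrite ?mulr0 ?addr0 ?add0r //.
- by rewrite h01.
- by rewrite h11 -mulrA EM; congr (_ * _ ^ _); ring.
Qed.

Theorem mainTheorem11 (theta : Rdefinitions.R)
  (hirr : forall p q : Z, q <> Z0 -> (theta * IZR q)%R <> IZR p) :
  exists e1 e2 : series,
    inv_space theta e1 /\ inv_space theta e2 /\
    forall phi : series, inv_space theta phi ->
      exists! ab : Cplx * Cplx, phi = (fun k l => ab.1 * e1 k l + ab.2 * e2 k l).
Proof.
exists (ef theta 1 0), (ef theta 0 1).
split; first by split; [exact: ef_H0 | exact: ef_Z6].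
split; first by split; [exact: ef_H0 | exact: ef_Z6].
move=> phi hphi; exists (phi 0 0, phi 1 0); split.
  apply: functional_extensionality => a; apply: functional_extensionality => b.
  exact: repr.
move=> [x y] E.
have E00 := congr1 (fun F => F 0 0) E; have E10 := congr1 (fun F => F 1 0) E.
move: E00 E10; rewrite /= !ef00 !ef10 !mulr1 !mulr0 addr0 add0r => -> ->.
done.
Qed.
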